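(* Let $A\in\mathbb{R}^{n\times n}$, $B\in\mathbb{R}^n$ with $(A,B)$ controllable, $n\ge2$, and $\mathcal{C}=(B\;AB\;\cdots\;A^{n-1}B)$. For $k=1,\dots,n-1$ let $\mathrm{an}_k\in\mathbb{R}^{(n-k)\times(n-k+1)}$ have full row rank, with $\mathrm{an}_kB_{k-1}=0$, where $B_0=B$ and $B_k=\mathrm{an}_k\cdots\mathrm{an}_1A^kB$. Then $B_{n-1}$ is a nonzero real number and $$e_n^T\mathcal{C}^{-1}=\frac{1}{B_{n-1}}\,\mathrm{an}_{n-1}\mathrm{an}_{n-2}\cdots\mathrm{an}_2\mathrm{an}_1 .$$
   Context: $e_n$ is the $n$-th canonical basis vector of $\mathbb{R}^n$. *)

(* Defs.v *)
From HB Require Import structures.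
From mathcomp Require Import all_boot all_order all_algebra.
Set Implicit Arguments. Unset Strict Implicit. Unset Printing Implicit Defensive.
Import Order.TTheory GRing.Theory Num.Theory.
Local Open Scope ring_scope.

Section Defs.
Variables (R : fieldType) (n : nat).

Definition ctrb_mx (A : 'M[R]_n) (B : 'cV[R]_n) : 'M[R]_n :=
  \matrix_(i < n, j < n) (A ^+ j *m B) i 0.

Definition controllable (A : 'M[R]_n) (B : 'cV[R]_n) : Prop :=
  \rank (ctrb_mx A B) = n.

(* an k : 'M_(n-k, n-k+1), meaningful for 1 <= k <= n-1.
   an_prod an k = an_k * an_(k-1) * ... * an_1 : 'M_(n-k, n)  (an_prod an 0 = identity).
   conform_mx is only used to align dimensions that are (propositionally)
   equal for k < n; it then is the identity. *)
Fixpoint an_prod (an : forall k : nat, 'M[R]_(n - k, (n - k).+1)) (k : nat)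
  : 'M[R]_(n - k, n) :=
  match k with
  | 0 => conform_mx (0 : 'M[R]_(n - 0, n)) (1%:M : 'M[R]_n)
  | k'.+1 => an k'.+1 *m conform_mx (0 : 'M[R]_((n - k'.+1).+1, n)) (an_prod an k')
  end.

Definition Bseq (A : 'M[R]_n) (B : 'cV[R]_n)
  (an : forall k : nat, 'M[R]_(n - k, (n - k).+1)) (k : nat) : 'M[R]_(n - k, 1) :=
  an_prod an k *m (A ^+ k *m B).

Definition an_times_Bprev (A : 'M[R]_n) (B : 'cV[R]_n)
  (an : forall k : nat, 'M[R]_(n - k, (n - k).+1)) (k : nat) : 'M[R]_(n - k, 1) :=
  an k *m conform_mx (0 : 'M[R]_((n - k).+1, 1)) (Bseq A B an k.-1).

Definition Blast (A : 'M[R]_n) (B : 'cV[R]_n)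
  (an : forall k : nat, 'M[R]_(n - k, (n - k).+1)) : R :=
  (conform_mx (0 : 'M[R]_1) (Bseq A B an n.-1)) 0 0.

Definition an_full (an : forall k : nat, 'M[R]_(n - k, (n - k).+1)) : 'rV[R]_n :=
  conform_mx (0 : 'rV[R]_n) (an_prod an n.-1).

Definition e_last_row : 'rV[R]_n := \row_(j < n) ((j == n.-1 :> nat)%:R).

End Defs.

(* Main.v *)
Require Import Defs.
From HB Require Import structures.
From mathcomp Require Import all_boot all_order all_algebra.
From mathcomp Require Import zify.
Import Order.TTheory GRing.Theory Num.Theory.
Local Open Scope ring_scope.

Section H.
Variable R : fieldType.

Lemma confM p p' q r (M : 'M[R]_(p,q)) (X : 'M[R]_(q,r)) : p = p' ->
  conform_mx (0:'M[R]_(p',r)) (M *m X) = conform_mx (0:'M[R]_(p',q)) M *m X.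
Proof. by move=> e; subst; rewrite !conform_mx_id. Qed.

Lemma conf0 p p' q q' : conform_mx (0:'M[R]_(p',q')) (0:'M[R]_(p,q)) = 0.
Proof.
case: (eqVneq p p') => [e|ne]; last by rewrite nonconform_mx // ne.
case: (eqVneq q q') => [e'|ne]; last by rewrite nonconform_mx // ne orbT.
by subst; rewrite conform_mx_id.
Qed.

Lemma confrk p p' q q' (M : 'M[R]_(p,q)) : p = p' -> q = q' ->
  \rank (conform_mx (0:'M[R]_(p',q')) M) = \rank M.
Proof. by move=> e e'; subst; rewrite conform_mx_id. Qed.
End H.

Theorem mainTheorem13 (R : realFieldType) (n : nat) (hn : (2 <= n)%N)
  (A : 'M[R]_n) (B : 'cV[R]_n)
  (an : forall k : nat, 'M[R]_(n - k, (n - k).+1)) :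
  controllable A B ->
  (forall k : nat, (1 <= k <= n.-1)%N -> row_free (an k)) ->
  (forall k : nat, (1 <= k <= n.-1)%N -> an_times_Bprev A B an k = 0) ->
  Blast A B an != 0 /\
  e_last_row R n *m invmx (ctrb_mx A B) = (Blast A B an)^-1 *: an_full an.
Proof.
move=> hc hf hz.
have inv : forall k, (k <= n.-1)%N ->
  (forall j, (j < k)%N -> an_prod an k *m (A ^+ j *m B) = 0) /\
  row_free (an_prod an k).
  elim=> [_|k IH hk].
    split=> // ; rewrite /row_free /= confrk ?mxrank1 ?subn0 //.
  have [IH1 IH2] := IH (ltnW hk).
  have e : (n - k = (n - k.+1).+1)%N by rewrite subnS prednK // subn_gt0; lia.
  split.
    move=> j; rewrite ltnS leq_eqVlt => /orP [/eqP ->|hj] /=.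
      rewrite -mulmxA -confM //.
      have := hz k.+1; rewrite /an_times_Bprev /Bseq /=; apply.
      by rewrite hk.
    by rewrite -mulmxA -confM // IH1 // conf0 mulmx0.
  rewrite /row_free /= mxrankMfree.
    by apply: hf; rewrite hk.
  by move: IH2; rewrite /row_free confrk // -e.
have hm : (n.-1 <= n.-1)%N by [].
have [I1 I2] := inv _ hm.
have e1 : (n - n.-1 = 1)%N by lia.
set Q := an_full an.
set b := Blast A B an.
set C := ctrb_mx A B.
have Cu : C \in unitmx by rewrite -row_free_unit /row_free hc.
have colC : forall j : 'I_n, col j C = A ^+ j *m B.
  by move=> j; apply/matrixP => i k; rewrite !mxE (ord1 k).
have QC : Q *m C = b *: e_last_row R n.
  apply/matrixP => i j; rewrite (ord1 i).
  have -> : (Q *m C) 0 j = (Q *m (A ^+ j *m B)) 0 0.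
    by rewrite !mxE; apply: eq_bigr => k _; rewrite mxE.
  rewrite [in RHS]mxE [e_last_row _ _ _ _]mxE.
  have jn := ltn_ord j.
  case: (ltnP j n.-1) => hj.
    rewrite /Q /an_full -confM // I1 // conf0 mxE.
    have -> : (j == n.-1 :> nat) = false by apply/negbTE/eqP; lia.
    by rewrite mulr0.
  have -> : (j : nat) = n.-1 by lia.
  by rewrite eqxx mulr1 /Q /an_full -confM.
have Qn0 : Q != 0.
  have hQ : \rank Q = \rank (an_prod an n.-1) by apply: confrk.
  apply/eqP => Q0; move: I2; rewrite /row_free -hQ Q0 mxrank0 => /eqP; lia.
have bn0 : b != 0.
  apply/eqP => b0; move: QC; rewrite b0 scale0r => /(congr1 (mulmx^~ (invmx C))).
  by rewrite mulmxK // mul0mx; apply/eqP.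
split => //.
have -> : e_last_row R n = b^-1 *: (Q *m C) by rewrite QC scalerA mulVf // scale1r.
by rewrite -scalemxAl mulmxK.
Qed.
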